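(* Let $D$ be a rectangle whose upper and lower sides $P^1,P^2$ have length $a$ and whose left and right sides $Q^1,Q^2$ have length $b$. Then for every $k\in\mathbb{Z}_+$, $$\lambda_k^{Q^1Q^2}(D)\ \ge\ \frac{\pi^2}{b^2}\,M\!\left(\frac{b}{a}\,k\right),$$ where $M:[0,\infty)\to[0,\infty)$ is the inverse function of the strictly increasing continuous bijection $y\mapsto F(y)=\sum_{j=0}^{\infty}(y-j^2)_+^{1/2}$, $y\ge 0$, and $z_+=\max\{z,0\}$.
   Context: $\lambda_k^{Q^1Q^2}(D)$ denotes the $k$-th eigenvalue (with multiplicity, nondecreasing order) of $-\Delta$ on $D$ with Dirichlet condition on the left and right sides $Q^1,Q^2$ and Neumann condition on the upper and lower sides $P^1,P^2$. Its eigenvalues are $\pi^2(i^2/a^2+j^2/b^2)$, $i=1,2,\dots$, $j=0,1,2,\dots$. *)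

(* Defs.v *)
From HB Require Import structures.
From mathcomp Require Import all_boot all_order all_algebra.
From mathcomp Require Import all_classical all_reals all_analysis.
Set Implicit Arguments. Unset Strict Implicit. Unset Printing Implicit Defensive.
Import Order.TTheory GRing.Theory Num.Theory.
Local Open Scope classical_set_scope.
Local Open Scope ring_scope.

(* Eigenvalue pi^2 (i^2/a^2 + j^2/b^2) of the mixed Dirichlet(Q^1,Q^2)/Neumann(P^1,P^2)
   problem on the a x b rectangle, indexed by i >= 1, j >= 0. *)
Definition mixed_eig {R : realType} (a b : R) (i j : nat) : R :=
  pi ^+ 2 * ((i%:R) ^+ 2 / a ^+ 2 + (j%:R) ^+ 2 / b ^+ 2).

Local Close Scope ring_scope.
Definition mixed_count_upto {R : realType} (a b t : R) (n : nat) : nat :=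
  \sum_(1 <= i < n.+1) \sum_(0 <= j < n.+1) nat_of_bool (mixed_eig a b i j <= t)%R.

Local Open Scope ring_scope.
(* k-th eigenvalue, counted with multiplicity in nondecreasing order:
   the least t such that at least k eigenvalues are <= t. *)
Definition lambda_QQ {R : realType} (a b : R) (k : nat) : R :=
  inf [set t : R | exists n : nat, (k <= mixed_count_upto a b t n)%N].

Definition Fsum {R : realType} (y : R) : R :=
  limn (fun n : nat => \sum_(0 <= j < n) Num.sqrt (Num.max (y - (j%:R) ^+ 2) 0)).

Definition Minv {R : realType} (z : R) : R :=
  xget 0 [set y : R | 0 <= y /\ Fsum y = z].

(* Main.v *)
Require Import Defs.
From HB Require Import structures.
From mathcomp Require Import all_boot all_order all_algebra.
From mathcomp Require Import all_classical all_reals all_analysis.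
From mathcomp Require Import ring lra zify.
Import Order.TTheory GRing.Theory Num.Theory.
Local Open Scope ring_scope.

Section Aux.
Context {R : realType}.

Definition gg (y : R) (j : nat) : R := Num.sqrt (Num.max (y - (j%:R) ^+ 2) 0).

Lemma gg_ge0 y j : 0 <= gg y j.
Proof. exact: sqrtr_ge0. Qed.

Lemma gg_tail0 y N j : y <= N%:R -> (N < j)%N -> gg y j = 0.
Proof.
move=> hy hj; rewrite /gg max_r ?sqrtr0 //.
rewrite subr_le0 (le_trans hy) // -natrX ler_nat; nia.
Qed.

Lemma Fsum_eq y N : y <= N%:R -> Fsum y = \sum_(0 <= j < N.+1) gg y j.
Proof.
move=> hy; rewrite /Fsum; apply: norm_lim_near_cst.
near=> n.
have hn : (N.+1 <= n)%N by near: n; exact: nbhs_infty_ge.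
rewrite (@big_cat_nat _ _ _ N.+1) //= [X in _ + X](_ : _ = 0) ?addr0 //.
rewrite big_nat_cond big1 // => j /andP[/andP[hj _] _]; exact: gg_tail0 hy hj.
Unshelve. all: end_near.
Qed.

Lemma gg_mono s y j : s <= y -> gg s j <= gg y j.
Proof.
move=> hsy; rewrite /gg ler_wsqrtr // ge_max !le_max lexx orbT andbT.
by rewrite lerD2r hsy.
Qed.

Lemma sum_mono s y N : 0 <= s -> s < y ->
  \sum_(0 <= j < N.+1) gg s j < \sum_(0 <= j < N.+1) gg y j.
Proof.
move=> hs hsy; rewrite !(@big_ltn _ _ _ 0) //.
apply: ltr_leD; last by apply: ler_sum => j _; exact: gg_mono (ltW hsy).
rewrite /gg expr0n /= !subr0 !max_l //; last exact: (le_trans hs (ltW hsy)).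
by rewrite ltr_sqrt // (le_lt_trans hs hsy).
Qed.

Lemma sum_ext s n N : (n <= N)%N ->
  \sum_(0 <= j < n.+1) gg s j <= \sum_(0 <= j < N.+1) gg s j.
Proof.
move=> hn; rewrite (@big_cat_nat _ _ _ n.+1 0 N.+1) //= lerDl.
by apply: sumr_ge0 => j _; exact: gg_ge0.
Qed.

Lemma count_le (X : R) m : 0 <= X ->
  (\sum_(1 <= i < m.+1) nat_of_bool (i%:R <= X)%R)%:R <= X.
Proof.
move=> hX; elim: m => [|m IH]; first by rewrite big_geq.
rewrite big_nat_recr //= natrD.
suff H : forall c : bool, (c -> (m.+1)%:R <= X) ->
  (\sum_(1 <= i < m.+1) nat_of_bool (i%:R <= X)%R)%:R + (nat_of_bool c)%:R <= X.
  by apply: H.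
case=> /= h; last by rewrite addr0.
apply: le_trans (h isT); rewrite -natrD ler_nat.
have : (\sum_(1 <= i < m.+1) nat_of_bool (i%:R <= X)%R <= \sum_(1 <= i < m.+1) 1)%N.
  by apply: leq_sum => i _; case: (_ <= _)%R.
rewrite sum_nat_const_nat; lia.
Qed.

Lemma cond_le (a b t : R) i j : 0 < a -> 0 < b -> mixed_eig a b i j <= t ->
  i%:R <= a / b * gg (t * b ^+ 2 / pi ^+ 2) j.
Proof.
move=> ha hb h.
have hpi : 0 < pi :> R := pi_gt0 R.
set D := t * b ^+ 2 / pi ^+ 2 - (j%:R) ^+ 2.
have hab : 0 <= (a / b) ^+ 2 by rewrite sqr_ge0.
have key : (a / b) ^+ 2 * D - (i%:R) ^+ 2 = a ^+ 2 / pi ^+ 2 * (t - mixed_eig a b i j).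
  rewrite /D /mixed_eig; move: (pi : R) (lt0r_neq0 hpi) => p hp; field.
  by rewrite hp !gt_eqF.
have hD : (i%:R) ^+ 2 <= (a / b) ^+ 2 * D.
  rewrite -subr_ge0 key mulr_ge0 ?subr_ge0 //.
  by rewrite divr_ge0 // sqr_ge0.
apply: (@le_trans _ _ (a / b * Num.sqrt D)); last first.
  apply: ler_wpM2l; first by rewrite divr_ge0 ?ltW.
  by apply: ler_wsqrtr; rewrite le_max lexx.
have hab0 : 0 <= a / b by rewrite divr_ge0 // ltW.
rewrite -[a / b](@ger0_norm _ (a / b)) //.
rewrite -sqrtr_sqr -sqrtrM // -[i%:R](@ger0_norm _ (i%:R)) //.
by rewrite -sqrtr_sqr; apply: ler_wsqrtr.
Qed.

End Aux.

Lemma eig_mono (R : realType) (a b : R) i j k :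
  (i <= k)%N -> (j <= k)%N -> mixed_eig a b i j <= mixed_eig a b k k.
Proof.
move=> hi hj; rewrite /mixed_eig; apply: ler_wpM2l; first exact: sqr_ge0.
apply: lerD; (apply: ler_wpM2r; first by rewrite invr_ge0 sqr_ge0);
  rewrite -!natrX ler_nat leq_exp2r //.
Qed.

Theorem lemma3p2 (R : realType) (a b : R) (ha : 0 < a) (hb : 0 < b) (k : nat)
  (hk : (0 < k)%N) :
  pi ^+ 2 / b ^+ 2 * Minv (b / a * k%:R) <= lambda_QQ a b k.
Proof.
have hpi : 0 < pi :> R := pi_gt0 R.
set z := b / a * k%:R.
have hz : 0 < z by rewrite mulr_gt0 ?divr_gt0 // ltr0n.
have main : forall t n, (k <= mixed_count_upto a b t n)%N ->
    pi ^+ 2 / b ^+ 2 * Minv z <= t.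
  move=> t n hkn.
  set s := t * b ^+ 2 / pi ^+ 2.
  have hcnt : k%:R <= a / b * \sum_(0 <= j < n.+1) gg s j.
    apply: (@le_trans _ _ (mixed_count_upto a b t n)%:R); first by rewrite ler_nat.
    rewrite /mixed_count_upto exchange_big natr_sum mulr_sumr; apply: ler_sum => j _.
    have hX : 0 <= a / b * gg s j by rewrite mulr_ge0 ?gg_ge0 // divr_ge0 // ltW.
    apply: le_trans (count_le _ n hX).
    rewrite ler_nat; apply: leq_sum => i _.
    case E: (mixed_eig a b i j <= t)%R => //=.
    by rewrite (cond_le _ _ _ _ _ ha hb E).
  have hzs : z <= \sum_(0 <= j < n.+1) gg s j.
    have hba : 0 <= b / a by rewrite divr_ge0 // ltW.
    apply: le_trans (ler_wpM2l hba hcnt) _.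
    rewrite mulrA (_ : b / a * (a / b) = 1) ?mul1r //.
    by field; rewrite !gt_eqF.
  have hs : 0 <= s.
    rewrite leNgt; apply/negP => hs.
    have h0 : \sum_(0 <= j < n.+1) gg s j = 0.
      rewrite big1 // => j _; rewrite /gg max_r ?sqrtr0 //.
      by rewrite subr_le0 (le_trans (ltW hs)) // sqr_ge0.
    by move: hzs; rewrite h0 leNgt hz.
  have hM : Minv z <= s.
    rewrite /Minv; case: (pselect (exists y, 0 <= y /\ Fsum y = z)) => [ex|nex]; last first.
      by rewrite xgetPN // => y hy; apply: nex; exists y.
    have := xgetPex 0 ex; set y := xget _ _ => -[hy0 hFy].
    rewrite leNgt; apply/negP => hsy.
    set N := maxn n (maxn (Num.Def.archi_bound s) (Num.Def.archi_bound y)).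
    have hyN : y <= N%:R.
      apply: le_trans (ltW (archi_boundP hy0)) _; rewrite ler_nat; lia.
    have h1 := sum_mono _ _ N hs hsy.
    rewrite -(Fsum_eq _ _ hyN) hFy in h1.
    have h2 := @sum_ext R s n N (leq_maxl _ _).
    by move: (le_lt_trans (le_trans hzs h2) h1); rewrite ltxx.
  have hc : 0 <= pi ^+ 2 / b ^+ 2 by rewrite divr_ge0 ?sqr_ge0.
  apply: le_trans (ler_wpM2l hc hM) _.
  rewrite /s; move: (pi : R) (lt0r_neq0 hpi) => p hp.
  rewrite le_eqVlt; apply/orP; left; apply/eqP.
  by field; rewrite hp gt_eqF.
rewrite /lambda_QQ; apply: lb_le_inf.
  exists (mixed_eig a b k k); exists k.
  rewrite /mixed_count_upto.
  apply: (@leq_trans (\sum_(1 <= i < k.+1) 1)).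
    by rewrite sum_nat_const_nat subSS subn0 muln1.
  rewrite big_nat_cond [X in (_ <= X)%N]big_nat_cond; apply: leq_sum => i /andP[/andP[_ hi] _].
  rewrite (@big_ltn _ _ _ 0) // eig_mono //; lia.
by move=> t [n hn]; exact: main t n hn.
Qed.
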